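(* For each $\mathbf b\in\mathcal B$, the $\mathbb C$-linear map $g_{\mathbf b}:S_0\to\mathbb C$ defined by $g_{\mathbf b}(x^u)=g^{(\mathbf b)}_u$ ($u\in M$) vanishes on $\sum_{i=1}^nD_{i,0}S_0$, and the induced functionals $\{g_{\mathbf b}\}_{\mathbf b\in\mathcal B}$ form the basis of $\mathrm{Hom}_{\mathbb C}(\mathcal W_0,\mathbb C)$ dual to the basis $\{x^{\mathbf b}\}_{\mathbf b\in\mathcal B}$ of $\mathcal W_0$.
   Context: Let $A=\{\mathbf a_1,\dots,\mathbf a_m\}\subseteq\mathbb Z^n$ be linearly independent over $\mathbb R$ and $\ell_1,\dots,\ell_m$ positive integers (part of a relation $\ell_0\mathbf a_0=\sum_j\ell_j\mathbf a_j$, $\ell_0=\sum_j\ell_j$, $\mathbf a_0\in\mathbb Z^n$, $\gcd(\ell_0,\dots,\ell_m)=1$). Let $f_0=\sum_{j=1}^m\ell_jx^{\mathbf a_j}$. Let $V$ be the real span of $A$, $V_{\mathbb Z}=V\cap\mathbb Z^n$, $C(A)$ the real cone generated by $A$, $M=V_{\mathbb Z}\cap C(A)$. Let $S_0$ be the $\mathbb C$-span of $\{x^u:u\in M\}$, $D_{i,0}=x_i\partial/\partial x_i+x_i\partial f_0/\partial x_i$ ($i=1,\dots,n$), and $\mathcal W_0=S_0/\sum_iD_{i,0}S_0$ (which has basis $\{x^{\mathbf b}:\mathbf b\in\mathcal B\}$). Let $P(A)=\{\sum_jc_j\mathbf a_j:0\le c_j<1\}$ and $\mathcal B=V_{\mathbb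 Z}\cap P(A)$. For $z\in\mathbb C$, $l\in\mathbb Z$: $[z]_0=1$, $[z]_l=1/((z+1)\cdots(z+l))$ for $l>0$, $[z]_l=z(z-1)\cdots(z+l+1)$ for $l<0$. For $\mathbf b=\sum_jv_j\mathbf a_j\in\mathcal B$ ($v_j\in[0,1)$) and $u\in M$, let $g^{(\mathbf b)}_u=\prod_{j=1}^m[-v_j]_{s_j}\ell_j^{s_j}$ if $u=\sum_j(v_j-s_j)\mathbf a_j$ with all $s_j\in\mathbb Z_{\le0}$, and $g^{(\mathbf b)}_u=0$ otherwise (these are the coefficients of $\prod_j\ell_j^{v_j}g_j(\ell_jx^{\mathbf a_j})=\sum_ug^{(\mathbf b)}_ux^{-u}$, $g_j(t)=\sum_{s\le0}[-v_j]_st^{-v_j+s}$). *)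

(* Defs.v *)
From HB Require Import structures.
From mathcomp Require Import all_boot all_order all_algebra.
From mathcomp Require Import complex.
From mathcomp Require Import boolp classical_sets functions cardinality fsbigop reals.
Set Implicit Arguments. Unset Strict Implicit. Unset Printing Implicit Defensive.
Import Order.TTheory GRing.Theory Num.Theory.
Local Open Scope ring_scope.
Local Open Scope classical_set_scope.

Section Defs.
Variables (R : realType) (n m : nat).
Variable a : 'I_m -> 'rV[int]_n.
Variable l : 'I_m -> nat.

Local Notation C := R[i].

Definition toR (u : 'rV[int]_n) : 'rV[R]_n := map_mx (fun z : int => z%:~R) u.

Definition lin_indep : Prop :=
  forall c : 'I_m -> R, \sum_j c j *: toR (a j) = 0 -> forall j, c j = 0.

Definition Vspan : set 'rV[R]_n :=
  [set x | exists c : 'I_m -> R, x = \sum_j c j *: toR (a j)].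
Definition coneA : set 'rV[R]_n :=
  [set x | exists c : 'I_m -> R, (forall j, 0 <= c j) /\ x = \sum_j c j *: toR (a j)].
Definition parA : set 'rV[R]_n :=
  [set x | exists c : 'I_m -> R, (forall j, 0 <= c j < 1) /\ x = \sum_j c j *: toR (a j)].
Definition VZ : set 'rV[int]_n := [set u | Vspan (toR u)].
Definition Mset : set 'rV[int]_n := [set u | VZ u /\ coneA (toR u)].
Definition Bset : set 'rV[int]_n := [set u | VZ u /\ parA (toR u)].

Definition bracket (z : C) (k : int) : C :=
  match k with
  | Posz k => (\prod_(i < k) (z + (i.+1)%:R))^-1
  | Negz k => \prod_(i < k.+1) (z - i%:R)
  end.

Definition RtoC (x : R) : C := Complex x 0.

Definition gdata (b u : 'rV[int]_n) (p : ('I_m -> R) * ('I_m -> int)) : Prop :=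
  (forall j, 0 <= p.1 j < 1) /\ toR b = \sum_j p.1 j *: toR (a j) /\
  (forall j, p.2 j <= 0) /\ toR u = \sum_j (p.1 j - (p.2 j)%:~R) *: toR (a j).

(* g^(b)_u (the data (v,s) is unique by linear independence) *)
Definition gcoef (b u : 'rV[int]_n) : C :=
  match pselect (exists p, gdata b u p) with
  | left H => let p := projT1 (cid H) in
      \prod_j (bracket (- RtoC (p.1 j)) (p.2 j) * ((l j)%:R : C) ^ (p.2 j))
  | right _ => 0
  end.

(* Elements of S_0 are represented as formal finite sums  sum_k c_k x^{u_k}
   (lists of (coefficient, exponent) pairs with exponents in M); a linear
   functional on S_0 is determined by its values h(u) = phi(x^u), u in M. *)
Definition S0elt (p : seq (C * 'rV[int]_n)) : Prop :=
  forall t, t \in p -> Mset t.2.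

Definition lfeval (h : 'rV[int]_n -> C) (p : seq (C * 'rV[int]_n)) : C :=
  \sum_(t <- p) t.1 * h t.2.

(* D_{i,0} = x_i d/dx_i + x_i d f_0/dx_i, f_0 = sum_j l_j x^{a_j}:
   D_{i,0}(c x^u) = c u_i x^u + sum_j c l_j (a_j)_i x^{u + a_j} *)
Definition Dop (i : 'I_n) (p : seq (C * 'rV[int]_n)) : seq (C * 'rV[int]_n) :=
  flatten [seq (t.1 * (t.2 ord0 i)%:~R, t.2) ::
               [seq (t.1 * (l j)%:R * (a j ord0 i)%:~R, t.2 + a j) | j <- enum 'I_m]
          | t : C * 'rV[int]_n <- p].

Definition Dsum (p : 'I_n -> seq (C * 'rV[int]_n)) : seq (C * 'rV[int]_n) :=
  flatten [seq Dop i (p i) | i <- enum 'I_n].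

Definition kills_image (h : 'rV[int]_n -> C) : Prop :=
  forall p : 'I_n -> seq (C * 'rV[int]_n),
    (forall i, S0elt (p i)) -> lfeval h (Dsum p) = 0.

End Defs.

(* Main.v *)
Require Import Defs.
From HB Require Import structures.
From mathcomp Require Import all_boot all_order all_algebra.
From mathcomp Require Import complex.
From mathcomp Require Import boolp classical_sets functions cardinality fsbigop reals.
From mathcomp Require Import ring zify lra.
Import Order.TTheory GRing.Theory Num.Theory.
Local Open Scope ring_scope.
Local Open Scope classical_set_scope.
Set Implicit Arguments. Unset Strict Implicit. Unset Printing Implicit Defensive.

Section P.
Variables (R : realType) (n m : nat) (a : 'I_m -> 'rV[int]_n) (l : 'I_m -> nat).
Hypothesis Hind : @lin_indep R n m a.
Hypothesis Hlpos : forall j, (0 < l j)%N.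
Local Notation C := R[i].
Local Notation toR := (@toR R n).
Local Notation RtoC := (@RtoC R).
Local Notation gdata := (@gdata R n m a).
Local Notation gcoef := (@gcoef R n m a l).

Lemma RtoCE (x : R) : RtoC x = x%:C%C. Proof. by []. Qed.
Lemma RtoC_int (z : int) : RtoC (z%:~R) = z%:~R.
Proof. by rewrite RtoCE rmorph_int. Qed.

Lemma RtoCM (x y : R) : RtoC (x * y) = RtoC x * RtoC y.
Proof. by rewrite !RtoCE rmorphM. Qed.
Lemma RtoCB (x y : R) : RtoC (x - y) = RtoC x - RtoC y.
Proof. by rewrite !RtoCE rmorphB. Qed.
Lemma RtoC_sum k (F : 'I_k -> R) : RtoC (\sum_j F j) = \sum_j RtoC (F j).
Proof. by rewrite !RtoCE rmorph_sum. Qed.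

Lemma toRE u i : toR u 0 i = (u 0 i)%:~R.
Proof. by rewrite /toR mxE. Qed.

Lemma sumRE (c : 'I_m -> R) i :
  (\sum_j c j *: toR (a j)) 0 i = \sum_j c j * (a j 0 i)%:~R.
Proof. by rewrite summxE; apply: eq_bigr => j _; rewrite mxE toRE. Qed.

Lemma toRD u w : toR (u + w) = toR u + toR w.
Proof. by apply/matrixP => i j; rewrite !mxE intrD. Qed.

Lemma toRB u w : toR (u - w) = toR u - toR w.
Proof. by apply/matrixP => i j; rewrite !mxE intrB. Qed.

Lemma toR_inj : injective toR.
Proof.
move=> u w /matrixP H; apply/matrixP => i j; move: (H i j); rewrite !mxE.
exact: intr_inj.
Qed.

Lemma coef_uniq (c c' : 'I_m -> R) :
  \sum_j c j *: toR (a j) = \sum_j c' j *: toR (a j) -> forall j, c j = c' j.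
Proof.
move=> E j; apply/eqP; rewrite -subr_eq0; apply/eqP.
apply: (Hind (c := fun j => c j - c' j)).
under eq_bigr do rewrite scalerBl.
by rewrite sumrB E subrr.
Qed.

Definition Gf (v : 'I_m -> R) (s : 'I_m -> int) : C :=
  \prod_j (bracket (- RtoC (v j)) (s j) * ((l j)%:R : C) ^ (s j)).

Lemma gdata_uniq b u p q : gdata b u p -> gdata b u q ->
  (forall j, p.1 j = q.1 j) /\ (forall j, p.2 j = q.2 j).
Proof.
move=> [_ [Hb [_ Hu]]] [_ [Hb' [_ Hu']]].
have E1 := coef_uniq (etrans (esym Hb) Hb').
split => // j; have := coef_uniq (etrans (esym Hu) Hu') j.
rewrite E1 => /addrI/oppr_inj.
by move/intr_inj.
Qed.

Lemma gcoef_eq b u p : gdata b u p -> gcoef b u = Gf p.1 p.2.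
Proof.
move=> Hp; rewrite /gcoef; case: pselect => [H|[]]; last by exists p.
have Hq := projT2 (cid H).
have [E1 E2] := gdata_uniq Hq Hp.
by apply: eq_bigr => j _; rewrite E1 E2.
Qed.

Lemma gcoef_0 b u : ~ (exists p, gdata b u p) -> gcoef b u = 0.
Proof. by move=> H; rewrite /gcoef; case: pselect. Qed.

Lemma brN (z : C) (k : nat) : bracket z (- (k%:Z)) = \prod_(i < k) (z - i%:R).
Proof. by case: k => [|k] /=; rewrite ?big_ord0 ?invr1. Qed.

Lemma lC_neq0 k : ((l k)%:R : C) != 0.
Proof. by rewrite pnatr_eq0 -lt0n Hlpos. Qed.

Lemma Grec v s k : s k <= 0 ->
  Gf v (fun j => s j - (j == k)%:Z) * (l k)%:R
  = - (RtoC (v k) - (s k)%:~R) * Gf v s.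
Proof.
move=> sk0; rewrite /Gf (bigD1 k) //= [in RHS](bigD1 k) //=.
rewrite (eq_bigr (fun j => bracket (- RtoC (v j)) (s j) * ((l j)%:R : C) ^ (s j))); last first.
  by move=> j /negbTE ->; rewrite subr0.
set P := \prod_(j | j != k) _.
rewrite eqxx.
set N := `|s k|%N.
have Es : s k = - (N%:Z) by rewrite /N abszE ler0_norm // opprK.
have E2 : s k - 1 = - (N.+1%:Z) by rewrite Es intS opprD addrC.
rewrite E2 Es !brN -!invr_expz big_ord_recr /=.
have l0 := lC_neq0 k.
rewrite -[((l k)%:R : C) ^ (N.+1 %:Z)]/(((l k)%:R : C) ^+ N.+1).
rewrite -[((l k)%:R : C) ^ (N %:Z)]/(((l k)%:R : C) ^+ N).
rewrite exprSr invfM.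
have -> : ((- N%:Z)%:~R : C) = - (N%:R) by rewrite mulrNz.
field.
by rewrite l0 expf_neq0.
Qed.

Lemma sum_delta (c : 'I_m -> R) k :
  \sum_j (c j + (j == k)%:R) *: toR (a j) = \sum_j c j *: toR (a j) + toR (a k).
Proof.
under eq_bigr do rewrite scalerDl.
rewrite big_split /=; congr (_ + _).
rewrite (bigD1 k) //= eqxx scale1r big1 ?addr0 // => j /negbTE ->.
by rewrite scale0r.
Qed.

Lemma gdata_step b w v s k : gdata b w (v, s) ->
  gdata b (w + a k) (v, fun j => s j - (j == k)%:Z).
Proof.
move=> [Hv [Hb [Hs Hw]]]; split => //; split => //; split => /=.
  by move=> j; rewrite lerBlDr (le_trans (Hs j)) // lerDl.
rewrite toRD Hw -sum_delta; apply: eq_bigr => j _.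
rewrite /= intrB; congr (_ *: _); case: (j == k) => /=; ring.
Qed.

Lemma gdata_back b w v s k : gdata b (w + a k) (v, s) -> s k < 0 ->
  gdata b w (v, fun j => s j + (j == k)%:Z).
Proof.
move=> [Hv [Hb [Hs Hw]]] sk; split => //; split => //; split => /=.
  move=> j; case: eqP => [->|_]; last by rewrite addr0.
  move: sk; lia.
apply: (addIr (toR (a k))); rewrite -toRD Hw -sum_delta; apply: eq_bigr => j _.
rewrite /= intrD; congr (_ *: _); case: (j == k) => /=; ring.
Qed.

Lemma Mset_coef w : @Mset R n m a w ->
  exists c : 'I_m -> R, (forall j, 0 <= c j) /\ toR w = \sum_j c j *: toR (a j).
Proof. by move=> [_ [c [c0 E]]]; exists c. Qed.

Lemma toC_entry w (c : 'I_m -> R) i : toR w = \sum_j c j *: toR (a j) ->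
  ((w 0 i)%:~R : C) = \sum_j RtoC (c j) * (a j 0 i)%:~R.
Proof.
move=> /matrixP /(_ 0 i); rewrite toRE sumRE => /(congr1 RtoC).
rewrite RtoC_int => ->; rewrite RtoC_sum; apply: eq_bigr => j _.
by rewrite RtoCM RtoC_int.
Qed.

Lemma mono0 b w i : @Mset R n m a w ->
  (w 0 i)%:~R * gcoef b w
  + \sum_j (l j)%:R * (a j 0 i)%:~R * gcoef b (w + a j) = 0.
Proof.
move=> Hw.
case: (pselect (exists p, gdata b w p)) => [[[v s] Hp] | Hn].
  rewrite (gcoef_eq Hp) /=.
  under eq_bigr => j _.
    rewrite (gcoef_eq (gdata_step j Hp)) /= -mulrA mulrC -mulrA.
    rewrite Grec; last by case: Hp => _ [_ [Hs _]].
    over.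
  move: Hp => [_ [_ [_ Hu]]].
  rewrite (toC_entry i Hu) mulr_suml -big_split /= big1 // => j _.
  rewrite RtoCB RtoC_int.
  ring.
rewrite gcoef_0 // mulr0 add0r big1 // => j _.
rewrite gcoef_0 ?mulr0 // => -[[v s] Hp].
have [sk|] := ltP (s j) 0.
  by apply: Hn; exists (v, fun k => s k + (k == j)%:Z); apply: gdata_back sk.
move=> sj0.
have Hs := Hp; move: Hs => [Hv [_ [Hs Hu]]].
have sj : s j = 0 by apply/eqP; rewrite eq_le sj0 Hs.
have [c [c0 Ec]] := Mset_coef Hw.
move: Hu; rewrite toRD Ec -sum_delta => /coef_uniq /(_ j).
rewrite /= eqxx sj subr0 => E.
have := c0 j; have := Hv j; case/andP => _ vj1.
have E' : c j + 1 = v j by exact: E.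
have vj1' : v j < 1 by exact: vj1.
lra.
Qed.

Local Notation lfeval := (@lfeval R n).
Local Notation Dop := (@Dop R n m a l).

Lemma lfeval_cat h s1 s2 : lfeval h (s1 ++ s2) = lfeval h s1 + lfeval h s2.
Proof. by rewrite /lfeval big_cat. Qed.

Lemma lfeval_flatten h ss : lfeval h (flatten ss) = \sum_(s <- ss) lfeval h s.
Proof.
elim: ss => [|s ss IH]; first by rewrite big_nil /lfeval big_nil.
by rewrite /= lfeval_cat IH big_cons.
Qed.

Lemma sum_enum k (F : 'I_k -> C) : \sum_(j <- enum 'I_k) F j = \sum_j F j.
Proof. by rewrite enumT. Qed.

Lemma DopE h i p : lfeval h (Dop i p) =
  \sum_(t <- p) t.1 * ((t.2 ord0 i)%:~R * h t.2
     + \sum_j (l j)%:R * (a j ord0 i)%:~R * h (t.2 + a j)).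
Proof.
elim: p => [|t p IH]; first by rewrite big_nil /lfeval big_nil.
have -> : Dop i (t :: p) = Dop i [:: t] ++ Dop i p by rewrite /Dop /= cats0.
rewrite lfeval_cat IH big_cons; congr (_ + _).
rewrite /Dop /= cats0 /lfeval big_cons big_map sum_enum /= mulrDr mulrA.
congr (_ + _); rewrite mulr_sumr; apply: eq_bigr => j _; by rewrite !mulrA.
Qed.

Lemma claim1 b : @kills_image R n m a l (gcoef b).
Proof.
move=> p Hp; rewrite /Dsum lfeval_flatten big_map big1 // => i _.
rewrite DopE big_seq big1 // => t /(Hp i) Mt.
by rewrite (mono0 b i Mt) mulr0.
Qed.

Local Notation Bset := (@Bset R n m a).
Local Notation Mset := (@Mset R n m a).

Lemma Bset_coef b : Bset b ->
  exists c : 'I_m -> R, (forall j, 0 <= c j < 1) /\ toR b = \sum_j c j *: toR (a j).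
Proof. by move=> [_ [c [c0 E]]]; exists c. Qed.

Lemma claim2 b b' : Bset b -> Bset b' -> gcoef b b' = if b == b' then 1 else 0.
Proof.
move=> Hb Hb'.
have [c [c01 Ec]] := Bset_coef Hb.
have [c' [c'01 Ec']] := Bset_coef Hb'.
case: eqP => [<-|ne].
  have Hg : gdata b b (c, fun _ => 0).
    split => //; split => //; split => //=.
    by rewrite Ec; apply: eq_bigr => j _; rewrite subr0.
  rewrite (gcoef_eq Hg) /Gf /= big1 // => j _.
  by rewrite /= big_ord0 invr1 expr0z mulr1.
rewrite gcoef_0 // => -[[v s] [Hv [Hbv [Hs Hu]]]].
have E := coef_uniq (etrans (esym Hu) Ec').
have s0 : forall j, s j = 0.
  move=> j; have := E j; have := c'01 j; have := Hv j; have := Hs j => /=.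
  move=> sj /andP[v0 _] /andP[_ c1] Ej.
  have h : (-1 : int) < s j.
    rewrite -(ltr_int R) mulrNz.
    lra.
  lia.
apply: ne; apply: toR_inj; rewrite Hbv Ec'; apply: eq_bigr => j _.
by rewrite -E /= s0 subr0.
Qed.

Lemma Bbound b i : Bset b -> `|b 0 i| <= \sum_j `|a j 0 i|.
Proof.
move=> /Bset_coef [c [c01 Ec]].
rewrite -(ler_int R) intr_norm rmorph_sum.
move/matrixP: Ec => /(_ 0 i); rewrite toRE sumRE => ->.
apply: le_trans (ler_norm_sum _ _ _) _; apply: ler_sum => j _.
rewrite normrM -[X in _ <= X]/(`|a j 0 i|%:~R) intr_norm; apply: ler_piMl => //.
by have /andP[c0 c1] := c01 j; rewrite ger0_norm // ltW.
Qed.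

Lemma claim3 : finite_set Bset.
Proof.
pose K : int := \sum_i \sum_j `|a j 0 i|.
have K0 : 0 <= K by apply: sumr_ge0 => i _; apply: sumr_ge0 => *; exact: normr_ge0.
have HK : forall b i, Bset b -> `|b 0 i| <= K.
  move=> b i Hb; apply: le_trans (Bbound i Hb) _.
  rewrite /K (bigD1 i) //= lerDl; apply: sumr_ge0 => k _; apply: sumr_ge0 => *; exact: normr_ge0.
pose N := `|K|%N.
pose f (g : {ffun 'I_n -> 'I_(N.*2.+1)}) : 'rV[int]_n := \row_i ((g i : nat)%:Z - N%:Z).
have sub : Bset `<=` f @` setT; last first.
  apply: (sub_finite_set sub); apply: finite_image; exact: finite_finset.
move=> b Hb; exists [ffun i : 'I_n => inord (absz (b ord0 i + N%:Z))] => //.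
have EN : (N%:Z) = K by rewrite /N abszE ger0_norm.
apply/matrixP => i j; rewrite (ord1 i) !mxE ffunE.
have := HK b j Hb; have -> : b 0 j = b ord0 j by [].
move=> H; rewrite inordK; lia.
Qed.

Lemma lambda_ex : exists L : 'I_m -> 'I_n -> R,
  forall k j, \sum_i L k i * (a j 0 i)%:~R = (k == j)%:R.
Proof.
pose A : 'M[R]_(m, n) := \matrix_(j < m) toR (a j).
have fA : row_free A.
  apply: inj_row_free => v; rewrite mulmx_sum_row => H.
  apply/rowP => j; rewrite mxE.
  apply: (Hind (c := fun j => v 0 j)) => //.
  by rewrite -[RHS]H; apply: eq_bigr => k _; rewrite rowK.
have [B0 HB] := row_freeP fA.
exists (fun k i => B0 i k) => k j.
have := congr1 (fun M : 'M[R]_m => M j k) HB; rewrite !mxE eq_sym => <-.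
by apply: eq_bigr => i _; rewrite mxE toRE mulrC.
Qed.

Lemma kill_rel h (Hh : @kills_image R n m a l h) w (c : 'I_m -> R) k :
  Mset w -> toR w = \sum_j c j *: toR (a j) ->
  (l k)%:R * h (w + a k) = - RtoC (c k) * h w.
Proof.
move=> Mw Ew; have [L HL] := lambda_ex.
pose p := fun i : 'I_n => [:: (RtoC (L k i), w)].
have Hp : forall i, @S0elt R n m a (p i) by move=> i t; rewrite inE => /eqP ->.
have HLc : forall j, \sum_i RtoC (L k i) * (a j ord0 i)%:~R = (k == j)%:R.
  move=> j; have := congr1 RtoC (HL k j); rewrite RtoC_sum RtoCE rmorph_nat => <-.
  by apply: eq_bigr => i _; rewrite RtoCM RtoC_int.
have Ew' : forall i, ((w ord0 i)%:~R : C) = \sum_j RtoC (c j) * (a j 0 i)%:~R.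
  by move=> i; exact: toC_entry.
have := Hh p Hp; rewrite /Dsum lfeval_flatten big_map sum_enum.
under eq_bigr do rewrite DopE big_cons big_nil addr0 /= Ew' mulrDr.
rewrite big_split /=.
rewrite (eq_bigr (fun i => \sum_j RtoC (c j) * h w * (RtoC (L k i) * (a j 0 i)%:~R))); last first.
  by move=> i _; rewrite mulr_suml mulr_sumr; apply: eq_bigr => j _; ring.
rewrite exchange_big /=.
under eq_bigr do rewrite -mulr_sumr HLc.
rewrite (eq_bigr (fun i => \sum_j (l j)%:R * h (w + a j) * (RtoC (L k i) * (a j 0 i)%:~R))); last first.
  by move=> i _; rewrite mulr_sumr; apply: eq_bigr => j _; ring.
rewrite exchange_big /=.
under [X in _ + X]eq_bigr do rewrite -mulr_sumr HLc.
rewrite (bigD1 k) //= big1 ?addr0; last by move=> j; rewrite eq_sym => /negbTE ->; rewrite mulr0.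
rewrite (bigD1 k) //= big1 ?addr0; last by move=> j; rewrite eq_sym => /negbTE ->; rewrite mulr0.
rewrite eqxx !mulr1 => /eqP; rewrite addrC addr_eq0 => /eqP ->.
by rewrite mulNr.
Qed.

Lemma Gf_ext v s s' : (forall j, s j = s' j) -> Gf v s = Gf v s'.
Proof. by move=> E; apply: eq_bigr => j _; rewrite E. Qed.

Lemma Gf0 v s : (forall j, s j = 0) -> Gf v s = 1.
Proof.
by move=> E; rewrite /Gf big1 // => j _; rewrite E /= big_ord0 invr1 expr0z mulr1.
Qed.

Lemma gdata_M b w p : gdata b w p -> Mset w.
Proof.
move=> [Hv [_ [Hs Hw]]]; split; first by exists (fun j => p.1 j - (p.2 j)%:~R).
exists (fun j => p.1 j - (p.2 j)%:~R); split => // j.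
have /andP[v0 _] := Hv j; have := Hs j; rewrite -(ler_int R) => h.
rewrite subr_ge0; apply: le_trans h v0.
Qed.

Lemma ind_h h (Hh : @kills_image R n m a l h) b v :
  forall N s w, gdata b w (v, s) -> (\sum_j `|s j|)%N = N -> h w = h b * Gf v s.
Proof.
elim=> [|N IH] s w Hg HN.
  have Hs : forall j, s j <= 0 by case: Hg => _ [_ [Hs _]].
  have s0 : forall j, s j = 0.
    by move=> j; have := Hs j; rewrite (bigD1 j) //= in HN; lia.
  have -> : w = b.
    apply: toR_inj; case: Hg => _ [-> [_ ->]]; apply: eq_bigr => j _.
    by rewrite /= s0 subr0.
  by rewrite Gf0 // mulr1.
have Hs : forall j, s j <= 0 by case: Hg => _ [_ [Hs _]].
case: (pselect (exists k, s k < 0)) => [[k sk]|Hn]; last first.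
  exfalso; have s0 : forall j, s j = 0.
    move=> j; have := Hs j; case: (ltrP (s j) 0) => [hh|hh]; last lia.
    by exfalso; apply: Hn; exists j.
  by move: HN; rewrite big1 // => j _; rewrite s0.
pose s' := fun j => s j + (j == k)%:Z.
pose w' := w - a k.
have Ew : w = w' + a k by rewrite /w' subrK.
have Hg' : gdata b w' (v, s') by apply: gdata_back sk; rewrite -Ew.
have HN' : (\sum_j `|s' j|)%N = N.
  have Esum : (\sum_(i < m | i != k) `|s' i|)%N = (\sum_(i < m | i != k) `|s i|)%N.
    by apply: eq_bigr => j /negbTE Hj; rewrite /s' Hj addr0.
  move: HN; rewrite (bigD1 k) //= [X in _ -> X = _](bigD1 k) //= Esum.
  rewrite /s' eqxx /=.
  have tst : forall (x : int) (S N : nat), x < 0 ->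
    (absz x + S = N.+1)%N -> (absz (x + 1)%R + S = N)%N by move=> *; lia.
  exact: tst.
have IH' := IH s' w' Hg' HN'.
have Mw' := gdata_M Hg'.
have Ew' : toR w' = \sum_j (v j - (s' j)%:~R) *: toR (a j) by case: Hg' => _ [_ [_ ->]].
have KR := kill_rel Hh k Mw' Ew'.
have s'k : s' k <= 0 by rewrite /s' eqxx /=; move: sk; lia.
have GR := @Grec v s' k s'k.
have GE : Gf v (fun j => s' j - (j == k)%:Z) = Gf v s.
  by apply: Gf_ext => j; rewrite /s' addrK.
apply: (mulIf (lC_neq0 k)).
rewrite Ew mulrC KR IH' -mulrA -GE GR RtoCB RtoC_int.
ring.
Qed.

Lemma claim4 h (Hh : @kills_image R n m a l h) u : Mset u ->
  h u = \sum_(b \in Bset) h b * gcoef b u.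
Proof.
move=> Mu; have [c [c0 Ec]] := Mset_coef Mu.
pose t := fun j => Num.floor (c j).
pose v := fun j => c j - (t j)%:~R.
pose b := u - \sum_j t j *: a j.
have Hv : forall j, 0 <= v j < 1.
  move=> j; have h1 := Num.Theory.floor_le (c j); have h2 := Num.Theory.floorD1_gt (c j).
  rewrite intrD in h2; rewrite /v /t; apply/andP; split; lra.
have Eb : toR b = \sum_j v j *: toR (a j).
  apply/matrixP => i0 i; rewrite (ord1 i0) toRE sumRE /b !mxE summxE.
  have Eu : ((u ord0 i)%:~R : R) = \sum_j c j * (a j 0 i)%:~R.
    by move/matrixP: Ec => /(_ 0 i); rewrite toRE sumRE.
  rewrite intrB Eu rmorph_sum /= -sumrB; apply: eq_bigr => j _.
  by rewrite mxE intrM /v mulrBl.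
have Bb : Bset b by split; [exists v | exists v].
have Hg : gdata b u (v, fun j => - t j).
  split => //; split => //; split => /=.
    by move=> j; rewrite oppr_le0 /t Num.Theory.floor_ge0.
  by rewrite Ec; apply: eq_bigr => j _; rewrite mulrNz opprK /v subrK.
rewrite (fsbigD1 b) //=; last exact: claim3.
rewrite fsbig1 ?addr0; last first.
  move=> b' [Bb' nb']; rewrite gcoef_0 ?mulr0 // => -[[v' s'] [Hv' [Hb' [Hs' Hu']]]].
  apply: nb'; apply: toR_inj.
  have E := coef_uniq (etrans (esym Hu') Hg.2.2.2).
  have Evv : forall j, v' j = v j.
    move=> j; have := E j => /= Ej.
    have := Hv j; have := Hv' j => /= /andP[a1 a2] /andP[b1 b2].
    have h1 : ((s' j + t j)%:~R : R) = v' j - v j.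
      by rewrite intrD; move: Ej; rewrite mulrNz; lra.
    have h3 : s' j + t j = 0.
      have h4 : (-1 : int) < s' j + t j by rewrite -(ltr_int R) mulrNz h1; lra.
      have h5 : s' j + t j < 1 by rewrite -(ltr_int R) h1; lra.
      lia.
    by move: h1; rewrite h3 => /esym /eqP; rewrite subr_eq0 => /eqP.
  by rewrite Hb' Eb; apply: eq_bigr => j _; rewrite /= Evv.
by rewrite (gcoef_eq Hg) /=; apply: (ind_h Hh Hg).
Qed.

End P.

Theorem proposition3p15 (R : realType) (n m : nat)
  (a : 'I_m -> 'rV[int]_n) (l : 'I_m -> nat)
  (a0 : 'rV[int]_n) (l0 : nat)
  (Hind : @lin_indep R n m a)
  (Hlpos : forall j, (0 < l j)%N)
  (Hl0 : l0 = (\sum_j l j)%N)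
  (Hrel : a0 *+ l0 = \sum_j a j *+ l j)
  (Hgcd : gcdn l0 (\big[gcdn/0%N]_j l j) = 1%N) :
  (* each g_b vanishes on sum_i D_{i,0} S_0 *)
  (forall b, @Bset R n m a b -> @kills_image R n m a l (@gcoef R n m a l b)) /\
  (* duality: g_b(x^b') = delta_{b,b'} *)
  (forall b b', @Bset R n m a b -> @Bset R n m a b' ->
     @gcoef R n m a l b b' = (if b == b' then 1 else 0)) /\
  (* B is finite and the g_b span Hom_C(W_0, C) *)
  finite_set (@Bset R n m a) /\
  (forall h : 'rV[int]_n -> R[i], @kills_image R n m a l h ->
     forall u, @Mset R n m a u -> h u = \sum_(b \in @Bset R n m a) h b * @gcoef R n m a l b u).
Proof.
split; first by move=> b _; apply: claim1.
split; first by move=> b b' Hb Hb'; apply: claim2.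
split; first exact: claim3.
by move=> h Hh u Mu; apply: claim4.
Qed.
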